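(* For $(\varphi,\xi,\theta)$ let $C_\theta=\cos\theta\,(|\uparrow\rangle\langle\uparrow|+|\downarrow\rangle\langle\downarrow|)+\sin\theta\,(|\uparrow\rangle\langle\downarrow|-|\downarrow\rangle\langle\uparrow|)$ and $\gamma_{\varphi,\xi}=\cos\varphi\,|\uparrow\rangle+\sin\varphi\,e^{i\xi}|\downarrow\rangle$. Let $$S=\{(\varphi,0,\theta):\theta\in(0,\pi/2),\ \varphi\in[\theta/2,\ \pi/4+\theta/2]\}\ \cup\ \{(\varphi,\pi,\theta):\theta\in(0,\pi/2),\ \varphi\in(\pi/4-\theta/2,\ (\pi-\theta)/2]\}.$$ Then: (i) for every coin setup $(C,\gamma)$ with $C$ a non-trivial coin there is $(\varphi,\xi,\theta)\in S$ with $(C,\gamma)\sim_l(C_\theta,\gamma_{\varphi,\xi})$; (ii) if $s,s'\in S$ give asymptotically distributionally equivalent setups $(C_\theta,\gamma_{\varphi,\xi})\sim_l(C_{\theta'},\gamma_{\varphi',\xi'})$, then $s=s'$. Thus $(\varphi,\xi,\theta)\mapsto(C_\theta,\gamma_{\varphi,\xi})$ is a bijection from $S$ onto the asymptotic distributional equivalence classes of coin setups with non-trivial coins.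
   Context: Let $\mathcal{H}=\ell^2(\mathbb{Z})\otimes\mathbb{C}^2$, with position basis $\{|j\rangle: j\in\mathbb{Z}\}$ and coin basis $\{|\uparrow\rangle,|\downarrow\rangle\}$. A (quantum) coin is any $C\in U(2)$, written $C=a|\uparrow\rangle\langle\uparrow|+b|\uparrow\rangle\langle\downarrow|+c|\downarrow\rangle\langle\uparrow|+d|\downarrow\rangle\langle\downarrow|$; it is trivial iff $abcd=0$ and non-trivial otherwise. The walk operator is $W(C)=T(\mathbb{1}\otimes C)$ with $T=\sum_{j}|j+1\rangle\langle j|\otimes|\uparrow\rangle\langle\uparrow|+\sum_{j}|j-1\rangle\langle j|\otimes|\downarrow\rangle\langle\downarrow|$. A coin setup is a pair $(C,\gamma)$, $C\in U(2)$, $\gamma=\alpha|\uparrow\rangle+\beta|\downarrow\rangle$ a unit vector; $p_{(C,\gamma)}(j,n)=\langle\psi_n|(|j\rangle\langle j|\otimes\mathbb{1})|\psi_n\rangle$ with $\psi_n=W(C)^n(|0\rangle\otimes\gamma)$. For a setup $\mathcal{C}$ let $X_n$ be a $\mathbb{Z}$-valued random variable with law $p_{\mathcal{C}}(\cdot,n)$. Known fact (Konno): if $C$ is non-trivial, $X_n/n$ converges in distribution to the law with density $f_{\mathcal{C}}(x)=\dfrac{\sqrt{1-|a|^2}\,(1-\lambda_{\mathcal{C}}x)}{\pi(1-x^2)\sqrt{|a|^2-x^2}}$ for $x\in(-|a|,|a|)$ and $0$ elsewhere, where $\lambda_{\mathcal{C}}=|\alpha|^2-|\beta|^2+\dfrac{a\alpha\overline{b\beta}+\overline{a\alpha}b\beta}{|a|^2}$.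 Two setups $\mathcal{C}_1,\mathcal{C}_2$ with non-trivial coins are asymptotically distributionally equivalent, $\mathcal{C}_1\sim_l\mathcal{C}_2$, iff $f_{\mathcal{C}_1}=f_{\mathcal{C}_2}$. *)

(* Defs.v *)
From mathcomp Require Import all_boot all_order all_algebra.
From mathcomp Require Import complex spectral.
From mathcomp Require Import reals trigo.
Import Order.TTheory GRing.Theory Num.Theory.

Set Implicit Arguments.
Unset Strict Implicit.
Unset Printing Implicit Defensive.

Local Open Scope ring_scope.

Section QWalk.
Variable R : realType.

Definition up : 'I_2 := ord0.
Definition dn : 'I_2 := ord_max.

Definition is_coin (C : 'M[R[i]]_2) : Prop := C \is unitarymx.

Definition coin_a (C : 'M[R[i]]_2) := C up up.
Definition coin_b (C : 'M[R[i]]_2) := C up dn.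
Definition coin_c (C : 'M[R[i]]_2) := C dn up.
Definition coin_d (C : 'M[R[i]]_2) := C dn dn.

Definition nontrivial_coin (C : 'M[R[i]]_2) : Prop :=
  coin_a C * coin_b C * coin_c C * coin_d C != 0.

Definition alpha (g : 'cV[R[i]]_2) := g up 0.
Definition beta (g : 'cV[R[i]]_2) := g dn 0.

Definition unit_state (g : 'cV[R[i]]_2) : Prop :=
  Normc.normc (alpha g) ^+ 2 + Normc.normc (beta g) ^+ 2 = 1.

Definition lambda (C : 'M[R[i]]_2) (g : 'cV[R[i]]_2) : R :=
  let a := coin_a C in let b := coin_b C in
  let al := alpha g in let be := beta g in
  Normc.normc al ^+ 2 - Normc.normc be ^+ 2
  + complex.Re (a * al * Num.conj (b * be) + Num.conj (a * al) * (b * be))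
    / Normc.normc a ^+ 2.

(* Konno's limit density f_{(C,gamma)} *)
Definition density (C : 'M[R[i]]_2) (g : 'cV[R[i]]_2) (x : R) : R :=
  let A := Normc.normc (coin_a C) in
  if (- A < x) && (x < A) then
    Num.sqrt (1 - A ^+ 2) * (1 - lambda C g * x)
      / (pi * (1 - x ^+ 2) * Num.sqrt (A ^+ 2 - x ^+ 2))
  else 0.

Definition adequiv (C1 : 'M[R[i]]_2) (g1 : 'cV[R[i]]_2)
                   (C2 : 'M[R[i]]_2) (g2 : 'cV[R[i]]_2) : Prop :=
  density C1 g1 = density C2 g2.

Definition Ctheta (th : R) : 'M[R[i]]_2 :=
  \matrix_(i < 2, j < 2)
    if i == j then Complex (cos th) 0
    else if i == up then Complex (sin th) 0 else Complex (- sin th) 0.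

Definition gamma_st (ph xi : R) : 'cV[R[i]]_2 :=
  \col_(i < 2)
    if i == up then Complex (cos ph) 0
    else Complex (sin ph) 0 * Complex (cos xi) (sin xi).

Definition inS (s : R * R * R) : Prop :=
  let: (ph, xi, th) := s in
  (0 < th < pi / 2) /\
  ((xi = 0 /\ th / 2 <= ph <= pi / 4 + th / 2) \/
   (xi = pi /\ pi / 4 - th / 2 < ph <= (pi - th) / 2)).

End QWalk.

(* Main.v *)
Require Import Defs.
From mathcomp Require Import all_boot all_order all_algebra.
From mathcomp Require Import complex spectral.
From mathcomp Require Import reals trigo.
From mathcomp Require Import ring lra.
Import Order.TTheory GRing.Theory Num.Theory.
Local Open Scope ring_scope.
Set Implicit Arguments.
Unset Strict Implicit.

Section S.
Variable R : realType.

Lemma normc2 (x : R[i]) : Normc.normc x ^+ 2 = complex.Re x ^+ 2 + complex.Im x ^+ 2.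
Proof. case: x => a b /=; rewrite sqr_sqrtr // addr_ge0 // sqr_ge0 //.
Qed.

Lemma normc_ge0 (x : R[i]) : 0 <= Normc.normc x.
Proof. case: x => a b /=; exact: sqrtr_ge0. Qed.

Lemma dens_eq (C1 C2 : 'M[R[i]]_2) g1 g2 :
  Normc.normc (coin_a C1) = Normc.normc (coin_a C2) ->
  lambda C1 g1 = lambda C2 g2 -> adequiv C1 g1 C2 g2.
Proof. by move=> H1 H2; rewrite /adequiv /density H1 H2. Qed.

Lemma lamS (th ph xi : R) : cos th != 0 ->
  lambda (Ctheta th) (gamma_st ph xi) =
  cos ph ^+ 2 - sin ph ^+ 2 + 2 * sin th * cos ph * sin ph * cos xi / cos th.
Proof.
move=> c0.
rewrite /lambda /coin_a /coin_b /alpha /beta /Ctheta /gamma_st !mxE /=.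
rewrite !sqr_sqrtr ?addr_ge0 ?sqr_ge0 // expr0n /= !(mul0r,mulr0,subr0,addr0,oppr0,add0r).
have -> : (sin ph * cos xi) ^+ 2 + (sin ph * sin xi) ^+ 2 = sin ph ^+ 2.
  by rewrite !exprMn -mulrDr cos2Dsin2 mulr1.
by field.
Qed.

Lemma normcS (th : R) : 0 <= cos th -> Normc.normc (coin_a (Ctheta th)) = cos th.
Proof.
move=> h; rewrite /coin_a /Ctheta mxE /= expr0n /= addr0 sqrtr_sqr ger0_norm //.
Qed.

Lemma lamS0 (th ph : R) : cos th != 0 ->
  lambda (Ctheta th) (gamma_st ph 0) * cos th = cos (ph + ph - th).
Proof. by move=> h; rewrite lamS // cos0 cosB cosD sinD; field. Qed.

Lemma lamSpi (th ph : R) : cos th != 0 ->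
  lambda (Ctheta th) (gamma_st ph pi) * cos th = cos (ph + ph + th).
Proof. by move=> h; rewrite lamS // cospi cosD cosD sinD; field. Qed.

Lemma cos_inj (x y : R) : 0 <= x <= pi -> 0 <= y <= pi -> cos x = cos y -> x = y.
Proof.
move=> hx hy e.
by rewrite -(@cosK R x) ?in_itv //= -(@cosK R y) ?in_itv //= e.
Qed.

Lemma cos_inj' (x y : R) : cos x = cos y -> 0 <= x <= pi -> 0 <= y <= pi -> x = y.
Proof. by move=> e hx hy; apply: cos_inj. Qed.

Lemma re_bound (p q : R[i]) :
  `|complex.Re (p * Num.conj q + Num.conj p * q)| <= 2 * Normc.normc p * Normc.normc q.
Proof.
case: p => p1 p2; case: q => q1 q2 /=.
rewrite -mulrA -sqrtrM ?addr_ge0 ?sqr_ge0 //.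
have -> : p1 * q1 - p2 * - q2 + (p1 * q1 - - p2 * q2) = 2 * (p1 * q1 + p2 * q2) by ring.
rewrite normrM ger0_norm // ler_pM2l // -sqrtr_sqr.
apply: ler_wsqrtr; have := sqr_ge0 (p1 * q2 - p2 * q1); nra.
Qed.

Lemma unit_row (C : 'M[R[i]]_2) : is_coin C ->
  Normc.normc (coin_a C) ^+ 2 + Normc.normc (coin_b C) ^+ 2 = 1.
Proof.
move/unitarymxP => e.
have := congr1 (fun M : 'M[R[i]]_2 => M up up) e.
rewrite !mxE big_ord_recr big_ord_recr big_ord0 /= !mxE.
have -> : widen_ord (m:=2) (leqnSn 1) ord_max = up by apply: val_inj.
rewrite /coin_a /coin_b add0r; case: (C up up) => a1 a2; case: (C up ord_max) => b1 b2.
move=> /(congr1 (@complex.Re R)) /=.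
rewrite !sqr_sqrtr ?addr_ge0 ?sqr_ge0 // => <-; ring.
Qed.

Lemma dens_val (C : 'M[R[i]]_2) g (x : R) :
  - Normc.normc (coin_a C) < x < Normc.normc (coin_a C) ->
  density C g x = Num.sqrt (1 - Normc.normc (coin_a C) ^+ 2) * (1 - lambda C g * x)
      / (pi * (1 - x ^+ 2) * Num.sqrt (Normc.normc (coin_a C) ^+ 2 - x ^+ 2)).
Proof. by move=> h; rewrite /density h. Qed.

Lemma dens_out (C : 'M[R[i]]_2) g (x : R) :
  ~~ (- Normc.normc (coin_a C) < x < Normc.normc (coin_a C)) -> density C g x = 0.
Proof. by move=> h; rewrite /density (negbTE h). Qed.

Lemma den_neq0 (A x : R) : 0 < A < 1 -> - A < x < A ->
  pi * (1 - x ^+ 2) * Num.sqrt (A ^+ 2 - x ^+ 2) != 0.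
Proof.
move=> /andP[h0 h1] /andP[h2 h3].
rewrite !mulf_neq0 //; first by rewrite gt_eqF // pi_gt0.
  by rewrite subr_eq0 eq_sym; apply/eqP => e; nra.
by rewrite sqrtr_eq0 -ltNge; nra.
Qed.

Lemma num_neq0 (A : R) : 0 < A < 1 -> Num.sqrt (1 - A ^+ 2) != 0.
Proof. by move=> /andP[h0 h1]; rewrite sqrtr_eq0 -ltNge; nra. Qed.

Lemma dens_zero (C : 'M[R[i]]_2) g (x : R) :
  0 < Normc.normc (coin_a C) < 1 ->
  - Normc.normc (coin_a C) < x < Normc.normc (coin_a C) ->
  density C g x = 0 -> 1 - lambda C g * x = 0.
Proof.
move=> hA hx; rewrite dens_val // => /eqP.
rewrite mulf_eq0 invr_eq0 (negbTE (den_neq0 hA hx)) orbF mulf_eq0.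
by rewrite (negbTE (num_neq0 hA)) /= => /eqP.
Qed.

Lemma dens_inv (C1 C2 : 'M[R[i]]_2) g1 g2 :
  0 < Normc.normc (coin_a C1) < 1 -> 0 < Normc.normc (coin_a C2) < 1 ->
  adequiv C1 g1 C2 g2 ->
  Normc.normc (coin_a C1) = Normc.normc (coin_a C2) /\ lambda C1 g1 = lambda C2 g2.
Proof.
move=> h1 h2 e.
have key : forall (C C' : 'M[R[i]]_2) g g', 0 < Normc.normc (coin_a C') < 1 ->
    density C g = density C' g' ->
    ~ Normc.normc (coin_a C) < Normc.normc (coin_a C').
  move=> C C' g g' h' e' lt.
  have hA : 0 <= Normc.normc (coin_a C) by exact: normc_ge0.
  pose x := (Normc.normc (coin_a C) + Normc.normc (coin_a C')) / 2.
  have hx : - Normc.normc (coin_a C') < x < Normc.normc (coin_a C') by apply/andP; split; rewrite /x; lra.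
  have hx' : - Normc.normc (coin_a C') < - x < Normc.normc (coin_a C') by apply/andP; split; rewrite /x; lra.
  have z1 : density C g x = 0 by apply: dens_out; rewrite negb_and -!leNgt /x; apply/orP; right; lra.
  have z2 : density C g (- x) = 0 by apply: dens_out; rewrite negb_and -!leNgt /x; apply/orP; left; lra.
  have := dens_zero (g:=g') h' hx; rewrite -e' z1 => /(_ erefl) f1.
  have := dens_zero (g:=g') h' hx'; rewrite -e' z2 => /(_ erefl) f2.
  lra.
have eA : Normc.normc (coin_a C1) = Normc.normc (coin_a C2).
  case: (ltgtP (Normc.normc (coin_a C1)) (Normc.normc (coin_a C2))) => // lt.
    by case: (key _ _ _ _ h2 e lt).
  by case: (key _ _ _ _ h1 (esym e) lt).
split=> //.
pose x := Normc.normc (coin_a C1) / 2.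
have hx : - Normc.normc (coin_a C1) < x < Normc.normc (coin_a C1) by apply/andP; split; rewrite /x; lra.
have := congr1 (fun f => f x) e => /=.
rewrite dens_val // dens_val -eA //.
move=> /(congr1 (fun t => t * (pi * (1 - x ^+ 2) * Num.sqrt (Normc.normc (coin_a C1) ^+ 2 - x ^+ 2)))).
rewrite !mulfVK ?den_neq0 // => /(mulfI (num_neq0 h1)) e2.
have : lambda C1 g1 * x = lambda C2 g2 * x by lra.
by move/(mulIf _); apply; rewrite /x; apply/eqP => h; lra.
Qed.
End S.

Lemma cos_pos_lt1 (R : realType) (th : R) : 0 < th < pi / 2 -> 0 < cos th < 1.
Proof.
move=> /andP[h0 h1]; have pi0 := @pi_gt0 R.
apply/andP; split; first by apply: cos_gt0_pihalf; apply/andP; split; lra.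
rewrite -(@cos0 R) ltr_cos ?in_itv /=; [lra| |]; try (apply/andP; split; lra).
Qed.

Theorem theorem4 (R : realType) :
  (forall (C : 'M[R[i]]_2) (g : 'cV[R[i]]_2),
      is_coin C -> unit_state g -> nontrivial_coin C ->
      exists ph xi th : R,
        inS (ph, xi, th) /\ adequiv C g (Ctheta th) (gamma_st ph xi)) /\
  (forall ph xi th ph' xi' th' : R,
      inS (ph, xi, th) -> inS (ph', xi', th') ->
      adequiv (Ctheta th) (gamma_st ph xi) (Ctheta th') (gamma_st ph' xi') ->
      (ph, xi, th) = (ph', xi', th')).
Proof.
have pi0 := @pi_gt0 R.
split.
  move=> C g hC hg hnt.
  move: hnt; rewrite /nontrivial_coin !mulf_eq0 !negb_or => /andP[/andP[/andP[a0 b0] _] _].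
  have hAB := unit_row hC.
  move: hg; rewrite /unit_state => huv.
  have hbd := re_bound (coin_a C * alpha g) (coin_b C * beta g).
  rewrite !Normc.normcM in hbd.
  have eL : lambda C g = Normc.normc (alpha g) ^+ 2 - Normc.normc (beta g) ^+ 2 +
     complex.Re (coin_a C * alpha g * Num.conj (coin_b C * beta g) +
                 Num.conj (coin_a C * alpha g) * (coin_b C * beta g)) /
     Normc.normc (coin_a C) ^+ 2 by [].
  have hA0 : 0 < Normc.normc (coin_a C).
    rewrite lt_neqAle normc_ge0 andbT eq_sym; apply: contra a0 => /eqP.
    by move/Normc.eq0_normc => ->.
  have hB0 : 0 < Normc.normc (coin_b C).
    rewrite lt_neqAle normc_ge0 andbT eq_sym; apply: contra b0 => /eqP.
    by move/Normc.eq0_normc => ->.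
  have hu := normc_ge0 (alpha g).
  have hv := normc_ge0 (beta g).
  move: eL hbd hAB huv hA0 hB0 hu hv.
  set A := Normc.normc (coin_a C); set B := Normc.normc (coin_b C).
  set u := Normc.normc (alpha g); set v := Normc.normc (beta g).
  set T := complex.Re _; set L := lambda C g.
  move=> eL hbd hAB huv hA0 hB0 hu hv.
  have hA1 : A < 1 by nra.
  have eLA : L * A * A = (u ^+ 2 - v ^+ 2) * A ^+ 2 + T by rewrite eL; field; rewrite gt_eqF.
  have [T1 T2] : - (2 * (A * u) * (B * v)) <= T /\ T <= 2 * (A * u) * (B * v).
    by move: hbd; rewrite ler_norml => /andP[].
  pose X := (u ^+ 2 - v ^+ 2) * A + 2 * u * B * v.
  pose Y := (u ^+ 2 - v ^+ 2) * A - 2 * u * B * v.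
  have eX : X ^+ 2 + ((u ^+ 2 - v ^+ 2) * B - 2 * u * v * A) ^+ 2 = 1.
    have -> : X ^+ 2 + ((u ^+ 2 - v ^+ 2) * B - 2 * u * v * A) ^+ 2
      = (u ^+ 2 + v ^+ 2) ^+ 2 * (A ^+ 2 + B ^+ 2) by rewrite /X; ring.
    by rewrite huv hAB; ring.
  have eY : Y ^+ 2 + ((u ^+ 2 - v ^+ 2) * B + 2 * u * v * A) ^+ 2 = 1.
    have -> : Y ^+ 2 + ((u ^+ 2 - v ^+ 2) * B + 2 * u * v * A) ^+ 2
      = (u ^+ 2 + v ^+ 2) ^+ 2 * (A ^+ 2 + B ^+ 2) by rewrite /Y; ring.
    by rewrite huv hAB; ring.
  have hX : X <= 1.
    have : X ^+ 2 <= 1 by have := sqr_ge0 ((u ^+ 2 - v ^+ 2) * B - 2 * u * v * A); lra.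
    by move=> h; nra.
  have hY : -1 <= Y.
    have : Y ^+ 2 <= 1 by have := sqr_ge0 ((u ^+ 2 - v ^+ 2) * B + 2 * u * v * A); lra.
    by move=> h; nra.
  have hLA1 : L * A <= 1.
    have : L * A * A <= A * X by rewrite eLA /X; nra.
    by move=> h; nra.
  have hLA2 : -1 <= L * A.
    have : A * Y <= L * A * A by rewrite eLA /Y; nra.
    by move=> h; nra.
  have hA' : -1 <= A <= 1 by apply/andP; split; lra.
  have hLA' : -1 <= L * A <= 1 by apply/andP; split; lra.
  have [/andP[th0 thpi] cth] := acos_def hA'.
  have [/andP[ps0 pspi] cps] := acos_def hLA'.
  set th := acos A in th0 thpi cth; set ps := acos (L * A) in ps0 pspi cps.
  have th_gt0 : 0 < th.
    case: (ltrP 0 th) => // h; have th00 : th = 0 by apply/eqP; rewrite eq_le h th0.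
    by move: cth; rewrite th00 cos0 => h1; lra.
  have th_lt : th < pi / 2.
    rewrite -(@ltr_cos R) ?in_itv /=; last 2 first.
    - by apply/andP; split; lra.
    - by apply/andP; split; lra.
    by case: (@pihalf_02_cos_pihalf R) => _ ->; rewrite cth.
  have cth0 : 0 <= cos th by rewrite cth; lra.
  have cthn0 : cos th != 0 by rewrite cth gt_eqF.
  case: (lerP ps (pi / 2)) => hps.
  - exists ((ps + th) / 2), 0, th; split.
      by split; [apply/andP; split | left; split => //; apply/andP; split]; lra.
    apply: dens_eq; first by rewrite normcS // cth.
    apply: (mulIf cthn0); rewrite lamS0 // cth.
    by have -> : (ps + th) / 2 + (ps + th) / 2 - th = ps by field.
  - exists ((ps - th) / 2), pi, th; split.
      by split; [apply/andP; split | right; split => //; apply/andP; split]; lra.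
    apply: dens_eq; first by rewrite normcS // cth.
    apply: (mulIf cthn0); rewrite lamSpi // cth.
    by have -> : (ps - th) / 2 + (ps - th) / 2 + th = ps by field.
move=> ph xi th ph' xi' th' hS hS' e.
have [hth hc] : 0 < th < pi / 2 /\ 0 < cos th < 1.
  by case: hS => h _; split => //; apply: cos_pos_lt1.
have [hth' hc'] : 0 < th' < pi / 2 /\ 0 < cos th' < 1.
  by case: hS' => h _; split => //; apply: cos_pos_lt1.
have c0 : 0 <= cos th by case/andP: hc => /ltW.
have c0' : 0 <= cos th' by case/andP: hc' => /ltW.
have hA1 : 0 < Normc.normc (coin_a (Ctheta th)) < 1 by rewrite normcS.
have hA2 : 0 < Normc.normc (coin_a (Ctheta th')) < 1 by rewrite normcS.
have [eA eL] := dens_inv hA1 hA2 e.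
rewrite !normcS // in eA.
have eth : th = th'.
  by apply: cos_inj => //; apply/andP; case/andP: hth; case/andP: hth' => *; split; lra.
subst th'.
have cn0 : cos th != 0 by case/andP: hc => h _; rewrite gt_eqF.
have hL := congr1 (fun t => t * cos th) eL => /=.
move: hL; case/andP: hth => t1 t2.
case: hS => _ [[-> /andP[p1 p2]]|[-> /andP[p1 p2]]];
  case: hS' => _ [[-> /andP[q1 q2]]|[-> /andP[q1 q2]]];
  rewrite ?lamS0 ?lamSpi // => hL;
  (have := cos_inj' hL; move=> /(_ ltac:(apply/andP; split; lra)) /(_ ltac:(apply/andP; split; lra)) h).
- by have -> : ph = ph' by lra.
- exfalso; lra.
- exfalso; lra.
- by have -> : ph = ph' by lra.
Qed.
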